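(* Let $K$ and $K'$ be two non-degenerate CMIs, with $\mathrm{can}(\mathrm{pur}(K))=(C,\langle\mathbb I_K,\mathbb I_K,P_i,1\le i\le t\rangle)$ and $\mathrm{can}(\mathrm{pur}(K'))=(C',\langle\mathbb I_{K'},\mathbb I_{K'},P'_j,1\le j\le s\rangle)$. If $K$ implies $K'$, then $\mathbb I_{K'}\subseteq\mathbb I_K$.
   Context: Setting: $X_1,\dots,X_n$ jointly distributed discrete random variables with $H(X_i)<\infty$; distribution unspecified. $X_\alpha=(X_i,i\in\alpha)$, $X_\emptyset$ constant. A CMI is $K=(C,\langle Q_1,\dots,Q_k\rangle)$, $k\ge0$, $C\subseteq\{1,\dots,n\}$, $\langle\cdot\rangle$ an unordered multiset of subsets; valid (for a given distribution) if $\sum_iH(X_{Q_i}|X_C)-H(X_{Q_1},\dots,X_{Q_k}|X_C)=0$. Empty members may be deleted. Degenerate = valid for every distribution, written $(\cdot,\langle\ \rangle)$. ''$K$ implies $K'$'': for every joint distribution, if $K$ is valid then $K'$ is valid. $\mathrm{pur}(K)=(C,\langle Q_i\setminus C:Q_i\setminus C\ne\emptyset\rangle)$. For pure $K$: $\mathbb I_K$ = indices lying in at least two members of the collection if $k\ge2$, else $\emptyset$; $P_1,\dots,P_t$ the nonempty sets among $Q_i\setminus\mathbb I_K$; $\mathrm{can}(K)=(\cdot,\langle\ \rangle)$ if $k\le1$, $(C,\langle\mathbb I_K,\mathbb I_K\rangle)$ if $k\ge2,\mathbb I_K\ne\emptyset,t\le1$, $(C,\langle P_1..P_t\rangle)$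 if $k\ge2,\mathbb I_K=\emptyset$, $(C,\langle\mathbb I_K,\mathbb I_K,P_1..P_t\rangle)$ if $k\ge2,\mathbb I_K\ne\emptyset,t\ge2$. For a general CMI $K$, $\mathbb I_K$ is the repeated-index set of $\mathrm{pur}(K)$. General-form notation: copies of $\mathbb I_K$ omitted when empty, $t=0$ for the case $(C,\langle\mathbb I_K,\mathbb I_K\rangle)$. *)

(* Defs.v *)
From HB Require Import structures.
From mathcomp Require Import all_boot all_order all_algebra.
From mathcomp Require Import all_classical all_reals all_analysis.
From mathcomp Require Import Rstruct Rstruct_topology.
From Stdlib Require Import Rdefinitions.

Set Implicit Arguments.
Unset Strict Implicit.
Unset Printing Implicit Defensive.
Import Order.TTheory GRing.Theory Num.Theory.

Local Open Scope classical_set_scope.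
Local Open Scope ring_scope.

(* A joint distribution of n discrete random variables X_1..X_n (indices are
   'I_n).  Discrete alphabets are countable; since entropies depend only on the
   distribution up to relabelling of values, each X_i takes values in nat.
   A joint distribution is a probability mass function on value-tuples. *)
Definition vtuple (n : nat) := {ffun 'I_n -> nat}.

(* X_alpha: the value tuple restricted to alpha (coordinates outside alpha
   are set to 0), so X_emptyset is constant. *)
Definition restr n (alpha : {set 'I_n}) (x : vtuple n) : vtuple n :=
  [ffun i => if i \in alpha then x i else 0%N].

Definition marg n (p : vtuple n -> R) (alpha : {set 'I_n}) (v : vtuple n) : R :=
  fine (esum [set x | restr alpha x = v] (fun x => (p x)%:E)).

Definition entropyE n (p : vtuple n -> R) (alpha : {set 'I_n}) : \bar R :=
  esum [set: vtuple n] (fun v => (- (marg p alpha v * ln (marg p alpha v)))%:E).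

Definition entropy n (p : vtuple n -> R) (alpha : {set 'I_n}) : R :=
  fine (entropyE p alpha).

Definition is_dist n (p : vtuple n -> R) : Prop :=
  (forall x, 0 <= p x) /\
  esum [set: vtuple n] (fun x => (p x)%:E) = 1%E /\
  (forall i : 'I_n, (entropyE p [set i] < +oo)%E).

Definition centropy n (p : vtuple n -> R) (A C : {set 'I_n}) : R :=
  entropy p (A :|: C) - entropy p C.

(* A CMI (C, <Q_1,...,Q_k>): the multiset is represented by a sequence
   (validity is invariant under permutation). *)
Definition CMI (n : nat) := ({set 'I_n} * seq {set 'I_n})%type.

Definition valid n (p : vtuple n -> R) (K : CMI n) : Prop :=
  \sum_(Q <- K.2) centropy p Q K.1
  - centropy p (\bigcup_(Q <- K.2) Q) K.1 = 0.

Definition degenerate n (K : CMI n) : Prop :=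
  forall p : vtuple n -> R, is_dist p -> valid p K.

Definition cmi_implies n (K K' : CMI n) : Prop :=
  forall p : vtuple n -> R, is_dist p -> valid p K -> valid p K'.

Definition pur n (K : CMI n) : CMI n :=
  (K.1, [seq Q :\: K.1 | Q <- K.2 & Q :\: K.1 != finset.set0]).

Definition Ipure n (K : CMI n) : {set 'I_n} :=
  if (2 <= size K.2)%nat
  then finset (fun i : 'I_n => (2 <= count (fun Q : {set 'I_n} => i \in Q) K.2)%nat)
  else finset.set0.

Definition IK n (K : CMI n) : {set 'I_n} := Ipure (pur K).

(* can(K) for a pure K (given for reference; the theorem only uses it to name
   the components). *)
Definition can n (K : CMI n) : option (CMI n) :=
  let I := Ipure K in
  let Ps := [seq Q :\: I | Q <- K.2 & Q :\: I != finset.set0] in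
  if (size K.2 <= 1)%nat then None (* degenerate (.,< >) *)
  else if I == finset.set0 then Some (K.1, Ps)
  else if (size Ps <= 1)%nat then Some (K.1, [:: I; I])
  else Some (K.1, [:: I, I & Ps]).

(* Main.v *)
Require Import Defs.
From mathcomp Require Import all_boot all_order all_algebra.
From HB Require Import structures.
From mathcomp Require Import all_boot all_order all_algebra.
From mathcomp Require Import all_classical all_reals all_analysis.
From mathcomp Require Import Rstruct Rstruct_topology.
From Stdlib Require Import Rdefinitions.
Import Order.TTheory GRing.Theory Num.Theory.
Local Open Scope classical_set_scope.
Local Open Scope ring_scope.
Lemma esum_two (T : choiceType) (a : T -> \bar R) x0 x1 : x0 != x1 -> (0 <= a x0)%E -> (0 <= a x1)%E ->
  (forall x, x != x0 -> x != x1 -> a x = 0%E) -> esum setT a = (a x0 + a x1)%E.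
Proof.
move=> n01 p0 p1 H.
have a0 : forall x, (0 <= a x)%E.
  by move=> x; case: (eqVneq x x0)=> [->//|h0]; case: (eqVneq x x1) => [->//|h1]; rewrite H.
rewrite (esumID [set x0]); last by move=> ? _; exact: a0.
rewrite setTI esum_set1 //.
rewrite (esumID [set x1]); last by move => ? _; exact: a0.
have -> : setT `&` ~` [set x0] `&` [set x1] = [set x1].
  apply/seteqP; split => x /=; first by case.
  move=> ->; split => //; split => //= e; by rewrite e eqxx in n01.
rewrite esum_set1 // esum1 ?adde0 // => x [[_ /= h0] h1]; apply: H; apply/eqP => //.
Qed.
From mathcomp Require Import lra.

Section Dist.
Variables (n : nat) (i : 'I_n).
Definition f0 : vtuple n := [ffun _ => 0%N].
Definition f1 : vtuple n := [ffun j => if j == i then 1%N else 0%N].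
Definition pd (x : vtuple n) : R := if x == f0 then 2^-1 else if x == f1 then 2^-1 else 0.

Lemma f01 : f0 != f1.
Proof. by apply/eqP => /ffunP/(_ i); rewrite !ffunE eqxx. Qed.

Lemma pd0 x : x != f0 -> x != f1 -> pd x = 0.
Proof. by rewrite /pd => /negbTE -> /negbTE ->. Qed.
Lemma pdf0 : pd f0 = 2^-1. Proof. by rewrite /pd eqxx. Qed.
Lemma pdf1 : pd f1 = 2^-1. Proof. by rewrite /pd eq_sym (negbTE f01) eqxx. Qed.

Lemma restr0 alpha : restr alpha f0 = f0.
Proof. by apply/ffunP => j; rewrite !ffunE; case: ifP. Qed.
Lemma restr1 alpha : restr alpha f1 = if i \in alpha then f1 else f0.
Proof.
apply/ffunP => j; rewrite !ffunE.
case: (eqVneq j i) => [->|ji]; case: (boolP (i \in alpha)) => ia;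
  rewrite ?ffunE ?eqxx ?ia ?(negbTE ji) //; by case: ifP.
Qed.

Lemma marg_pd alpha v : marg pd alpha v =
  ((restr alpha f0 == v)%:R + (restr alpha f1 == v)%:R) / 2.
Proof.
rewrite /marg esum_mkcond (@esum_two _ _ _ _ f01).
- have E x : (if x \in [set x | restr alpha x = v] then (pd x)%:E else 0%E)
     = ((restr alpha x == v)%:R * pd x)%:E.
    case: (eqVneq (restr alpha x) v) => h.
      by rewrite mem_set //= mul1r.
    by rewrite memNset ?mul0r //; apply/eqP.
  rewrite !E /= pdf0 pdf1; lra.
- by case: ifP => _ //; rewrite pdf0 lee_fin; lra.
- by case: ifP => _ //; rewrite pdf1 lee_fin; lra.
- by move=> x h0 h1; rewrite pd0 //; case: ifP.
Qed.

Definition hh := - (pd f0 * ln (pd f0)).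
Lemma hh_gt0 : 0 < hh.
Proof.
rewrite /hh pdf0 lnV ?posrE // mulrN opprK mulr_gt0 // ?invr_gt0 //; apply: ln_gt0; lra.
Qed.

Lemma f10 : f1 != f0. Proof. by rewrite eq_sym f01. Qed.

Lemma marg0 alpha : marg pd alpha f0 = if i \in alpha then 2^-1 else 1.
Proof.
rewrite marg_pd restr0 restr1 eqxx; case: ifP => _; rewrite ?eqxx ?(negbTE f10) /=; lra.
Qed.
Lemma marg1 alpha : marg pd alpha f1 = if i \in alpha then 2^-1 else 0.
Proof.
rewrite marg_pd restr0 restr1 (negbTE f01); case: ifP => _; rewrite ?eqxx ?(negbTE f01) /=; lra.
Qed.
Lemma margx alpha x : x != f0 -> x != f1 -> marg pd alpha x = 0.
Proof.
move=> h0 h1; rewrite marg_pd restr0 restr1; case: ifP => _;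
  rewrite ![_ == x]eq_sym (negbTE h0) ?(negbTE h1) /=; lra.
Qed.

Lemma entropyE_pd alpha : entropyE pd alpha = (if i \in alpha then hh + hh else 0)%:E.
Proof.
rewrite /entropyE (@esum_two _ _ _ _ f01).
- rewrite marg0 marg1 -EFinD /hh pdf0; case: ifP => _ //.
  by rewrite ln1 mul0r mulr0 oppr0 addr0.
- rewrite /= marg0 lee_fin; case: ifP => _; last by rewrite ln1 mulr0 oppr0.
  by rewrite -pdf0; apply/ltW/hh_gt0.
- rewrite /= marg1 lee_fin; case: ifP => _; last by rewrite ln0 // mulr0 oppr0.
  by rewrite -pdf0; apply/ltW/hh_gt0.
- move=> x h0 h1 /=; by rewrite margx // mul0r oppr0.
Qed.


Definition cval (b : bool) := (hh + hh) *+ b.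

Lemma entropy_pd alpha : entropy pd alpha = cval (i \in alpha).
Proof. by rewrite /entropy entropyE_pd /cval; case: ifP. Qed.

Lemma is_dist_pd : is_dist pd.
Proof.
split; [|split].
- by move=> x; rewrite /pd; case: ifP => _; [|case: ifP => _]; lra.
- rewrite (@esum_two _ _ _ _ f01).
  + by rewrite pdf0 pdf1 -EFinD; congr (_%:E); lra.
  + by rewrite pdf0 lee_fin; lra.
  + by rewrite pdf1 lee_fin; lra.
  + by move=> x h0 h1; rewrite pd0.
- by move=> j; rewrite entropyE_pd ltry.
Qed.

Lemma centropy_pd A C : centropy pd A C = cval (i \in A :\: C).
Proof.
rewrite /centropy !entropy_pd /cval !inE.
case: (i \in A); case: (i \in C); rewrite /= ?mulr0n ?mulr1n ?RminusE ?R0E ?subrr ?subr0 //.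
Qed.

Lemma sum_if (s : seq {set 'I_n}) (P : pred {set 'I_n}) (c : R^o) :
  \sum_(Q <- s) (c *+ P Q) = c *+ count P s.
Proof.
elim: s => [|Q s IH]; first by rewrite big_nil.
by rewrite big_cons IH /= mulrnDr.
Qed.

Lemma mem_bigcup_seq (s : seq {set 'I_n}) :
  (i \in \big[@finset.setU _/finset.set0]_(Q <- s) Q) = has (fun Q : {set 'I_n} => i \in Q) s.
Proof.
elim: s => [|Q s IH]; first by rewrite big_nil inE.
by rewrite big_cons finset.in_setU IH.
Qed.

Lemma validP (K : CMI n) :
  valid pd K <-> leq (count (fun Q => i \in Q :\: K.1) K.2) 1.
Proof.
rewrite /valid.
rewrite (eq_bigr (fun Q => cval (i \in Q :\: K.1))); last by move=> Q _; rewrite centropy_pd.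
rewrite sum_if centropy_pd /cval.
have -> : (i \in (\bigcup_(Q <- K.2) Q) :\: K.1) = has (fun Q => i \in Q :\: K.1) K.2.
  rewrite inE mem_bigcup_seq; case: (boolP (i \in K.1)) => h /=.
    by apply/esym/hasPn => Q _; rewrite inE h.
  by apply: eq_has => Q; rewrite inE h.
rewrite has_count.
set N := count _ _.
have hc : 0 < hh + hh by have := hh_gt0; lra.
split.
- move=> /eqP; case: N => [|[|N]] //=.
  by rewrite mulrS mulr1n addrC addrK mulrn_eq0 (gt_eqF hc).
- case: N => [|[|N]] h //; rewrite ?mulr0n ?mulr1n ?subrr //.
Qed.

End Dist.

Lemma count_pur n (i : 'I_n) (K : CMI n) :
  count (fun Q : {set 'I_n} => i \in Q) (pur K).2 = count (fun Q => i \in Q :\: K.1) K.2.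
Proof.
rewrite /pur /= count_map count_filter; apply: eq_count => Q /=.
case: (boolP (i \in Q :\: K.1)) => //= h.
by apply/finset.set0Pn; exists i.
Qed.

Theorem mainTheorem7 (n : nat) (K K' : CMI n) :
  ~ degenerate K -> ~ degenerate K' -> cmi_implies K K' ->
  IK K' \subset IK K.
Proof.
move=> _ _ Himp; apply/fintype.subsetP => i.
have key : leq (count (fun Q => i \in Q :\: K.1) K.2) 1 ->
           leq (count (fun Q => i \in Q :\: K'.1) K'.2) 1.
  by move=> h; apply/(@validP _ i K'); apply: Himp (@is_dist_pd _ i) _; apply/(@validP _ i K).
rewrite /IK /Ipure; case: ifP => hs'; last by rewrite inE.
rewrite inE count_pur => c2.
case: ifP => hs.
  rewrite inE count_pur ltnNge; apply/negP => h.
  by have := key h; rewrite leqNgt (leq_trans _ c2).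
have h1 := count_size (fun Q : {set 'I_n} => i \in Q) (pur K).2.
rewrite count_pur in h1.
have : leq (count (fun Q => i \in Q :\: K.1) K.2) 1.
  by apply: leq_trans h1 _; rewrite leqNgt hs.
by move/key; rewrite leqNgt (leq_trans _ c2).
Qed.
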